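(* Fix $\epsilon_2>0$ and $(u_\pm,v_\pm)$ with $v_\pm>0$ and $u_->u_++2\epsilon_2$, and let $v_*^{\epsilon_2}$ be the intermediate density of the two-shock Riemann solution (for small $\epsilon_1>0$). Then $$\lim_{\epsilon_1\to0}\sqrt{\epsilon_2^2+4\epsilon_1(v_*^{\epsilon_2}+v_-)^2}=\lim_{\epsilon_1\to0}\sqrt{\epsilon_2^2+4\epsilon_1(v_*^{\epsilon_2}+v_+)^2}=\frac{u_--u_+}{2}.$$
   Context: Perturbed Brio system: $u_t+(\tfrac12u^2+\tfrac12\epsilon_1v^2)_x=0$, $v_t+(uv-\epsilon_2v)_x=0$, $\epsilon_1,\epsilon_2>0$, $v>0$. The two-shock intermediate state $(u_*,v_* )$ satisfies $v_*>\max(v_-,v_+)$, $u_+<u_*<u_-$, $$u_*=u_-+(v_*-v_-)\frac{\epsilon_2-\sqrt{\epsilon_2^2+4\epsilon_1(v_*+v_-)^2}}{v_*+v_-},\qquad u_+=u_*+(v_+-v_* )\frac{\epsilon_2+\sqrt{\epsilon_2^2+4\epsilon_1(v_*+v_+)^2}}{v_*+v_+}.$$ *)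

(* Defs.v *)
From Stdlib Require Import Reals Lra.
Open Scope R_scope.

(* (us, vs) is the intermediate state of the two-shock Riemann solution of the
   perturbed Brio system with parameters eps1, eps2, connecting the left state
   (um, vm) = (u_-, v_-) to the right state (up, vp) = (u_+, v_+). *)
Definition two_shock_state (eps1 eps2 um vm up vp us vs : R) : Prop :=
  Rmax vm vp < vs /\ up < us < um /\
  us = um + (vs - vm) * (eps2 - sqrt (eps2 ^ 2 + 4 * eps1 * (vs + vm) ^ 2)) / (vs + vm) /\
  up = us + (vp - vs) * (eps2 + sqrt (eps2 ^ 2 + 4 * eps1 * (vs + vp) ^ 2)) / (vs + vp).

(* Main.v *)
Require Import Defs.
From Stdlib Require Import Reals Lra Psatz.
Open Scope R_scope.

Lemma prep e1 e2 um vm up vp us vs a b : 0<e1 -> 0<e2 -> 0<vm -> 0<vp ->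
  two_shock_state e1 e2 um vm up vp us vs ->
  a = sqrt (e2 ^ 2 + 4 * e1 * (vs + vm) ^ 2) ->
  b = sqrt (e2 ^ 2 + 4 * e1 * (vs + vp) ^ 2) ->
  vm < vs /\ vp < vs /\ a*a = e2 ^ 2 + 4 * e1 * (vs + vm) ^ 2 /\
  b*b = e2 ^ 2 + 4 * e1 * (vs + vp) ^ 2 /\ e2 <= a /\ e2 <= b /\
  um - up = a + b - (2*vm/(vs+vm))*(a-e2) - (2*vp/(vs+vp))*(b+e2).
Proof.
  intros h1 h2 h3 h4 [Hm [[H1 H2] [Hus Hup]]] Ha Hb.
  assert (vm < vs) by (pose proof (Rmax_l vm vp); lra).
  assert (vp < vs) by (pose proof (Rmax_r vm vp); lra).
  assert (Ea : a*a = e2 ^ 2 + 4 * e1 * (vs + vm) ^ 2)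
    by (rewrite Ha; apply sqrt_sqrt; pose proof (pow2_ge_0 e2); pose proof (pow2_ge_0 (vs+vm)); nra).
  assert (Eb : b*b = e2 ^ 2 + 4 * e1 * (vs + vp) ^ 2)
    by (rewrite Hb; apply sqrt_sqrt; pose proof (pow2_ge_0 e2); pose proof (pow2_ge_0 (vs+vp)); nra).
  assert (0 <= a) by (rewrite Ha; apply sqrt_pos).
  assert (0 <= b) by (rewrite Hb; apply sqrt_pos).
  assert (e2 <= a) by (destruct (Rle_or_lt e2 a) as [?|Hl]; [assumption|]; assert (a*a < e2*e2) by nra; assert (0 <= 4*e1*(vs+vm)^2) by (pose proof (pow2_ge_0 (vs+vm)); nra); simpl in Ea; nra).
  assert (e2 <= b) by (destruct (Rle_or_lt e2 b) as [?|Hl]; [assumption|]; assert (b*b < e2*e2) by nra; assert (0 <= 4*e1*(vs+vp)^2) by (pose proof (pow2_ge_0 (vs+vp)); nra); simpl in Eb; nra).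
  repeat split; try lra.
  rewrite <- Ha in Hus. rewrite <- Hb in Hup.
  rewrite Hup, Hus. field. lra.
Qed.

Lemma vs_large e1 e2 D vm vp vs a b M : 0<e1 -> 0<e2 -> 0<vm -> 0<vp -> 0 < M ->
  vm < vs -> vp < vs -> a*a = e2 ^ 2 + 4 * e1 * (vs + vm) ^ 2 ->
  b*b = e2 ^ 2 + 4 * e1 * (vs + vp) ^ 2 -> e2 <= a -> e2 <= b ->
  D = a + b - (2*vm/(vs+vm))*(a-e2) - (2*vp/(vs+vp))*(b+e2) ->
  e1 * (2*((M+vm)^2+(M+vp)^2)) < (D - 2*e2)*e2 -> M < vs.
Proof.
  intros h1 h2 h3 h4 h5 h6 h7 Ea Eb Ha Hb HD He.
  destruct (Rlt_or_le M vs) as [?|Hle]; [assumption|exfalso].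
  assert (0 <= 2*vm/(vs+vm)*(a-e2)).
  { apply Rmult_le_pos; [|lra]. unfold Rdiv; apply Rmult_le_pos; [lra| left; apply Rinv_0_lt_compat; lra]. }
  assert (0 <= 2*vp/(vs+vp)*(b+e2)).
  { apply Rmult_le_pos; [|lra]. unfold Rdiv; apply Rmult_le_pos; [lra| left; apply Rinv_0_lt_compat; lra]. }
  assert (D <= a + b) by lra.
  assert (Q1 : (vs+vm)^2 <= (M+vm)^2) by (simpl; nra).
  assert (Q2 : (vs+vp)^2 <= (M+vp)^2) by (simpl; nra).
  assert (A1 : (a-e2)*(2*e2) <= 4*e1*(M+vm)^2).
  { assert ((a-e2)*(2*e2) <= (a-e2)*(a+e2)) by nra.
    assert ((a-e2)*(a+e2) = 4 * e1 * (vs + vm) ^ 2) by (simpl in Ea |- *; nra).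
    nra. }
  assert (A2 : (b-e2)*(2*e2) <= 4*e1*(M+vp)^2).
  { assert ((b-e2)*(2*e2) <= (b-e2)*(b+e2)) by nra.
    assert ((b-e2)*(b+e2) = 4 * e1 * (vs + vp) ^ 2) by (simpl in Eb |- *; nra).
    nra. }
  nra.
Qed.

Lemma est e1 e2 D vm vp vs a b : 0<e1 -> 0<e2 -> 0<vm -> 0<vp ->
  3*(vm+vp) <= vs -> a*a = e2 ^ 2 + 4 * e1 * (vs + vm) ^ 2 ->
  b*b = e2 ^ 2 + 4 * e1 * (vs + vp) ^ 2 -> e2 <= a -> e2 <= b ->
  D = a + b - (2*vm/(vs+vm))*(a-e2) - (2*vp/(vs+vp))*(b+e2) ->
  Rabs (a - D/2) * vs <= 4*(vm+vp)*D + 3*(vm+vp)*(2*D+e2)^2/e2 /\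
  Rabs (b - D/2) * vs <= 4*(vm+vp)*D + 3*(vm+vp)*(2*D+e2)^2/e2.
Proof.
  intros h1 h2 h3 h4 h5 Ea Eb Ha Hb HD.
  set (p1 := 2*vm/(vs+vm)) in *. set (p2 := 2*vp/(vs+vp)) in *.
  assert (P1 : p1*(vs+vm) = 2*vm) by (unfold p1; field; lra).
  assert (P2 : p2*(vs+vp) = 2*vp) by (unfold p2; field; lra).
  assert (P1p : 0 <= p1) by (unfold p1, Rdiv; apply Rmult_le_pos; [lra| left; apply Rinv_0_lt_compat; lra]).
  assert (P2p : 0 <= p2) by (unfold p2, Rdiv; apply Rmult_le_pos; [lra| left; apply Rinv_0_lt_compat; lra]).
  assert (P1h : p1 <= 1/2) by nra.
  assert (P2h : p2 <= 1/2) by nra.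
  assert (P1v : p1*vs <= 2*vm) by nra.
  assert (P2v : p2*vs <= 2*vp) by nra.
  assert (T1 : 0 <= (1-p1)*(a-e2)) by nra.
  assert (T2 : 0 <= (1-p2)*(b+e2)) by nra.
  assert (Ba : a - e2 <= 2*D) by nra.
  assert (Bb : b + e2 <= 2*D) by nra.
  set (X := a + b - D).
  assert (X0 : 0 <= X) by (unfold X; nra).
  assert (Xv : X*vs <= 4*(vm+vp)*D).
  { unfold X. assert (a+b-D = p1*(a-e2)+p2*(b+e2)) by lra.
    rewrite H. nra. }
  set (A := 2*D+e2).
  assert (EA : e1*(vs+vm)^2 <= A^2/4).
  { assert (a <= A) by (unfold A; lra). simpl in Ea |- *. nra. }
  set (Y := b - a).
  assert (EY : Y*(a+b) = 4*e1*(vp-vm)*(2*vs+vm+vp)) by (unfold Y; simpl in Ea, Eb; nra).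
  assert (EW : Rabs (4*e1*(vp-vm)*(2*vs+vm+vp)) <= 12*e1*(vm+vp)*(vs+vm)).
  { assert (S1 : 4*e1*(vm+vp)*(2*vs+vm+vp) <= 12*e1*(vm+vp)*(vs+vm)).
    { assert (0 <= 4*e1*(vm+vp)) by nra. assert (2*vs+vm+vp <= 3*(vs+vm)) by lra. nra. }
    assert (S2 : 0 <= 4*e1*(2*vs+vm+vp)) by nra.
    apply Rabs_le. split; nra. }
  assert (EY2 : Rabs Y * (2*e2) <= 12*e1*(vm+vp)*(vs+vm)).
  { assert (Rabs Y * (2*e2) <= Rabs Y * (a+b)) by (pose proof (Rabs_pos Y); nra).
    rewrite <- (Rabs_pos_eq (a+b)) in H by lra. rewrite <- Rabs_mult, EY in H. lra. }
  assert (EY3 : Rabs Y * vs <= 3*(vm+vp)*A^2/(2*e2)).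
  { apply (Rmult_le_reg_r (2*e2)); [lra|].
    assert (12*e1*(vm+vp)*(vs+vm)*vs <= 3*(vm+vp)*A^2).
    { assert (Z1 : 0 <= e1*(vs+vm)*vm) by (apply Rmult_le_pos; nra).
      assert (e1*(vs+vm)*vs <= e1*(vs+vm)^2) by (simpl; nra).
      assert (e1*(vs+vm)*vs <= A^2/4) by lra.
      assert (0 <= 12*(vm+vp)) by lra.
      assert (12*(vm+vp)*(e1*(vs+vm)*vs) <= 12*(vm+vp)*(A^2/4)) by (apply Rmult_le_compat_l; lra).
      lra. }
    assert (Rabs Y * vs * (2 * e2) = (Rabs Y * (2*e2))*vs) by ring.
    rewrite H0. assert (3 * (vm + vp) * A ^ 2 / (2 * e2) * (2 * e2) = 3 * (vm + vp) * A ^ 2) by (field; lra).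
    rewrite H1. nra. }
  assert (K : 2*(vm+vp)*D + 3*(vm+vp)*A^2/(4*e2) <= 4*(vm+vp)*D + 3*(vm+vp)*A^2/e2).
  { assert (0 <= 3*(vm+vp)*A^2/(4*e2)).
    { unfold Rdiv. apply Rmult_le_pos. pose proof (pow2_ge_0 A). nra. left; apply Rinv_0_lt_compat; lra. }
    assert (3*(vm+vp)*A^2/e2 = 4*(3*(vm+vp)*A^2/(4*e2))) by (field; lra).
    assert (0 <= D) by nra. nra. }
  assert (EY4 : Rabs Y * vs / 2 <= 3*(vm+vp)*A^2/(4*e2)).
  { replace (3*(vm+vp)*A^2/(4*e2)) with (3*(vm+vp)*A^2/(2*e2)/2) by (field; lra). lra. }
  fold A.
  split.
  - replace (a - D/2) with (X/2 - Y/2) by (unfold X, Y; field).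
    assert (Rabs (X/2 - Y/2) <= X/2 + Rabs Y/2).
    { apply Rabs_le. pose proof (Rle_abs Y). pose proof (Rle_abs (-Y)) as HH. rewrite Rabs_Ropp in HH. lra. }
    assert (Rabs (X/2 - Y/2) * vs <= (X/2 + Rabs Y/2)*vs) by (apply Rmult_le_compat_r; lra).
    nra.
  - replace (b - D/2) with (X/2 + Y/2) by (unfold X, Y; field).
    assert (Rabs (X/2 + Y/2) <= X/2 + Rabs Y/2).
    { apply Rabs_le. pose proof (Rle_abs Y). pose proof (Rle_abs (-Y)) as HH. rewrite Rabs_Ropp in HH. lra. }
    assert (Rabs (X/2 + Y/2) * vs <= (X/2 + Rabs Y/2)*vs) by (apply Rmult_le_compat_r; lra).
    nra.
Qed.

Lemma both (eps2 um vm up vp : R) (ustar vstar : R -> R) (delta : R) :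
  0 < eps2 -> 0 < vm -> 0 < vp -> um > up + 2 * eps2 ->
  0 < delta ->
  (forall eps1, 0 < eps1 < delta ->
     two_shock_state eps1 eps2 um vm up vp (ustar eps1) (vstar eps1)) ->
  forall eps, eps > 0 -> exists alp, alp > 0 /\ forall x, 0 < x < delta -> Rabs (x - 0) < alp ->
   Rabs (sqrt (eps2 ^ 2 + 4 * x * (vstar x + vm) ^ 2) - (um - up)/2) < eps /\
   Rabs (sqrt (eps2 ^ 2 + 4 * x * (vstar x + vp) ^ 2) - (um - up)/2) < eps.
Proof.
  intros h1 h2 h3 h4 h5 HS eps Heps.
  set (D := um - up).
  set (K := 4*(vm+vp)*D + 3*(vm+vp)*(2*D+eps2)^2/eps2).
  assert (K0 : 0 <= K).
  { unfold K. assert (0 <= 3*(vm+vp)*(2*D+eps2)^2/eps2).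
    { unfold Rdiv. apply Rmult_le_pos. pose proof (pow2_ge_0 (2*D+eps2)). nra. left; apply Rinv_0_lt_compat; lra. }
    assert (0 < D) by (unfold D; lra). assert (0 <= 4*(vm+vp)*D) by (apply Rmult_le_pos; lra). lra. }
  set (M := 3*(vm+vp) + K/eps + 1).
  assert (KM : K < eps * M).
  { unfold M. assert (eps * (K/eps) = K) by (field; lra).
    assert (0 <= K/eps) by (unfold Rdiv; apply Rmult_le_pos; [lra| left; apply Rinv_0_lt_compat; lra]). nra. }
  assert (M0 : 0 < M) by (unfold M; assert (0 <= K/eps) by (unfold Rdiv; apply Rmult_le_pos; [lra| left; apply Rinv_0_lt_compat; lra]); lra).
  set (Q := 2*((M+vm)^2+(M+vp)^2)).
  assert (Q0 : 0 < Q) by (unfold Q; simpl; nra).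
  exists (Rmin delta ((D - 2*eps2)*eps2/Q)).
  split.
  { apply Rmin_pos; [lra|]. unfold Rdiv; apply Rmult_lt_0_compat; [unfold D; nra| apply Rinv_0_lt_compat; lra]. }
  intros x Hx Hax.
  rewrite Rminus_0_r, Rabs_pos_eq in Hax by lra.
  assert (Hx2 : x < (D - 2*eps2)*eps2/Q) by (pose proof (Rmin_r delta ((D - 2*eps2)*eps2/Q)); lra).
  assert (Hx3 : x * Q < (D - 2*eps2)*eps2).
  { apply (Rmult_lt_compat_r Q) in Hx2; [|lra]. replace ((D - 2*eps2)*eps2/Q*Q) with ((D - 2*eps2)*eps2) in Hx2 by (field; lra). lra. }
  destruct (prep x eps2 um vm up vp (ustar x) (vstar x)
     (sqrt (eps2 ^ 2 + 4 * x * (vstar x + vm) ^ 2)) (sqrt (eps2 ^ 2 + 4 * x * (vstar x + vp) ^ 2))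
     ltac:(lra) h1 h2 h3 (HS x Hx) eq_refl eq_refl) as [P1 [P2 [P3 [P4 [P5 [P6 P7]]]]]].
  fold D in P7.
  set (aa := sqrt (eps2 ^ 2 + 4 * x * (vstar x + vm) ^ 2)) in *.
  set (bb := sqrt (eps2 ^ 2 + 4 * x * (vstar x + vp) ^ 2)) in *.
  assert (HM : M < vstar x) by (apply (vs_large x eps2 D vm vp (vstar x) aa bb M); try assumption; try lra; exact Hx3).
  destruct (est x eps2 D vm vp (vstar x) aa bb ltac:(lra) h1 h2 h3
     ltac:(unfold M in HM; assert (0 <= K/eps) by (unfold Rdiv; apply Rmult_le_pos; [lra| left; apply Rinv_0_lt_compat; lra]); lra)
     P3 P4 P5 P6 P7) as [E1 E2].
  fold K in E1, E2.
  split.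
  - set (r := Rabs _) in E1 |- *. assert (r * vstar x < eps * vstar x) by nra. nra.
  - set (r := Rabs _) in E2 |- *. assert (r * vstar x < eps * vstar x) by nra. nra.
Qed.

Theorem lemma6p2 (eps2 um vm up vp : R) (ustar vstar : R -> R) (delta : R) :
  0 < eps2 -> 0 < vm -> 0 < vp -> um > up + 2 * eps2 ->
  0 < delta ->
  (forall eps1, 0 < eps1 < delta ->
     two_shock_state eps1 eps2 um vm up vp (ustar eps1) (vstar eps1)) ->
  limit1_in (fun eps1 => sqrt (eps2 ^ 2 + 4 * eps1 * (vstar eps1 + vm) ^ 2))
            (fun eps1 => 0 < eps1 < delta) ((um - up) / 2) 0 /\
  limit1_in (fun eps1 => sqrt (eps2 ^ 2 + 4 * eps1 * (vstar eps1 + vp) ^ 2))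
            (fun eps1 => 0 < eps1 < delta) ((um - up) / 2) 0.
Proof.
  intros h1 h2 h3 h4 h5 HS.
  pose proof (both eps2 um vm up vp ustar vstar delta h1 h2 h3 h4 h5 HS) as B.
  split; intros eps He; destruct (B eps He) as [alp [Ha Hb]]; exists alp; split; auto;
    intros x [Hx Hd]; simpl in *; unfold R_dist in *; apply (Hb x Hx Hd).
Qed.
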